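(* Let $G$ be a non-empty graph on $n$ vertices. Then $G$ has a spanning subgraph $G'$ with $e(G')\geq e(G)/2$ such that, if $q$ denotes the number of copies of $C_4$ in $G'$, every edge of $G'$ belongs to at most $\frac{16\log n}{e(G')}q$ copies of $C_4$ in $G'$.
   Context: A copy of $C_4$ is a subgraph isomorphic to the $4$-cycle. $\log$ is the natural logarithm; $e(\cdot)$ denotes number of edges. *)

(* Defs.v *)
From mathcomp Require Import all_boot.
From Stdlib Require Import Reals.
Set Implicit Arguments. Unset Strict Implicit. Unset Printing Implicit Defensive.

(* A simple graph on the vertex type T (a finType; n = #|T|) is given by its
   edge set E : {set {set T}}, each edge being a 2-element vertex set. *)
Definition simple_graph (T : finType) (E : {set {set T}}) : bool :=
  [forall e in E, #|e| == 2].

Definition cycle4 (T : finType) (a b c d : T) : {set {set T}} :=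
  [set [set a; b]; [set b; c]; [set c; d]; [set d; a]].

(* Q is (the edge set of) a copy of C_4 in the graph with edge set E.
   A copy of C_4 (a subgraph isomorphic to C_4, without isolated vertices)
   is determined by its edge set. *)
Definition is_C4_copy (T : finType) (E Q : {set {set T}}) : bool :=
  [exists a : T, exists b : T, exists c : T, exists d : T,
     [&& uniq [:: a; b; c; d], Q == cycle4 a b c d & Q \subset E]].

Definition C4_copies (T : finType) (E : {set {set T}}) : {set {set {set T}}} :=
  [set Q | is_C4_copy E Q].

Definition C4_deg (T : finType) (E : {set {set T}}) (e : {set T}) : nat :=
  #|[set Q in C4_copies E | e \in Q]|.

(* Main.v *)
Require Import Defs.
From mathcomp Require Import all_boot.
From Stdlib Require Import Reals Lra Lia Classical.
From mathcomp Require Import zify.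

Lemma copiesD1 (T : finType) (F : {set {set T}}) e :
  C4_copies (F :\ e) = [set Q in C4_copies F | e \notin Q].
Proof.
apply/setP => Q; rewrite !inE /is_C4_copy.
apply/idP/idP.
- case/existsP=> a /existsP[b /existsP[c /existsP[d /and3P[u eq sub]]]].
  rewrite subsetD1 in sub; case/andP: sub => sub eQ; rewrite eQ andbT.
  apply/existsP; exists a; apply/existsP; exists b; apply/existsP; exists c;
  apply/existsP; exists d; by rewrite u eq sub.
- case/andP => /existsP[a /existsP[b /existsP[c /existsP[d /and3P[u eq sub]]]]] eQ.
  apply/existsP; exists a; apply/existsP; exists b; apply/existsP; exists c;
  apply/existsP; exists d; by rewrite u eq subsetD1 sub eQ.
Qed.

Lemma copies_card_D1 (T : finType) (F : {set {set T}}) e :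
  (#|C4_copies (F :\ e)| + C4_deg F e = #|C4_copies F|)%N.
Proof.
rewrite copiesD1 /C4_deg.
rewrite -(cardID [set Q : {set {set T}} | e \in Q] (C4_copies F)) addnC.
congr (_ + _)%N; apply: eq_card => Q; rewrite !inE andbC //.
Qed.

Lemma deg_le (T : finType) (F : {set {set T}}) e :
  (C4_deg F e <= #|C4_copies F|)%N.
Proof.
apply: subset_leq_card; apply/subsetP => Q; rewrite inE; by case/andP.
Qed.

Lemma copies_bound (T : finType) (F : {set {set T}}) :
  (#|C4_copies F| <= #|T| * #|T| * #|T| * #|T|)%N.
Proof.
have sub : C4_copies F \subset
   [set cycle4 x.1.1.1 x.1.1.2 x.1.2 x.2 | x in [set: T * T * T * T]].
  apply/subsetP => Q; rewrite inE => /existsP[a /existsP[b /existsP[c /existsP[d /and3P[_ /eqP -> _]]]]].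
  by apply/imsetP; exists (a, b, c, d); rewrite ?inE.
apply: (leq_trans (subset_leq_card sub)).
apply: (leq_trans (leq_imset_card _ _)).
by rewrite cardsT !card_prod.
Qed.

Local Open Scope R_scope.
Lemma real_core (Q D c f : R) : 0 <= c -> 0 < f -> 1 <= Q -> D <= Q -> c/f*Q < D -> c < f.
Proof.
intros hc hf hQ hD hb.
assert (hu : c / f < 1) by nra.
assert (c = c / f * f) by (field; lra).
nra.
Qed.

Lemma real_step Q D c f mm a : 0<=Q -> 0<=c -> 0<f -> f<=mm -> c/f*Q < D ->
  Q <= exp a -> Q - D <= exp (a - c/mm).
Proof.
intros hQ hc hf hfm hb he.
assert (hv : c / mm <= c / f).
{ unfold Rdiv; apply Rmult_le_compat_l; auto. apply Rinv_le_contravar; lra. }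
assert (h1 := exp_ineq1_le (- (c/mm))).
assert (hp := exp_pos (- (c/mm))).
unfold Rminus at 2; rewrite exp_plus.
assert (Q * exp (- (c/mm)) <= exp a * exp (- (c/mm))) by (apply Rmult_le_compat_r; lra).
nra.
Qed.

Lemma real_contra Q L mm f : 1<=Q -> 0<L -> 0<mm -> 4*f < 3*mm ->
  Q <= exp(4*L - 16*L*(mm-f)/mm) -> False.
Proof.
intros hQ hL hm hf he.
replace (4*L - 16*L*(mm-f)/mm) with ((4*L*(4*f-3*mm)) * / mm) in he by (field; lra).
assert (h : 4*L*(4*f-3*mm) < 0) by nra.
assert (hi : 0 < / mm) by (apply Rinv_0_lt_compat; lra).
assert (hn : 4*L*(4*f-3*mm) * / mm < 0) by nra.
assert (exp (4*L*(4*f-3*mm) * / mm) < exp 0) by (apply exp_increasing; lra).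
rewrite exp_0 in H. lra.
Qed.

Local Close Scope R_scope.

Section Main.
Variables (T : finType) (E : {set {set T}}).
Hypothesis sg : simple_graph E.
Hypothesis E0 : (0 < #|E|)%N.

Definition good (F : {set {set T}}) := forall e, e \in F ->
  (INR (C4_deg F e) <= 16 * ln (INR #|T|) / INR #|F| * INR #|C4_copies F|)%R.

Lemma main_ind k : forall F : {set {set T}}, (#|F| <= k)%N -> F \subset E -> (#|E| <= 2 * #|F|)%N ->
  (INR #|C4_copies F| <= exp (4 * ln (INR #|T|) - 16 * ln (INR #|T|) * (INR #|E| - INR #|F|) / INR #|E|))%R ->
  exists E' : {set {set T}}, [/\ E' \subset E, (#|E| <= 2 * #|E'|)%N & good E'].
Proof.
elim: k => [|k IH] F hk hsub hE hinv.
  exists F; split => //; move=> e he; exfalso.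
  have : (0 < #|F|)%N by apply/card_gt0P; exists e.
  lia.
destruct (classic (good F)) as [hg|hng]; first by exists F.
destruct (not_all_ex_not _ _ hng) as [e he].
destruct (imply_to_and _ _ he) as [heF hbad].
apply Rnot_le_lt in hbad.
set L := ln (INR #|T|) in hinv hbad *.
set Q := INR #|C4_copies F| in hinv hbad *.
set D := INR (C4_deg F e) in hbad *.
set f := INR #|F| in hinv hbad *.
set mm := INR #|E| in hinv *.
have heE : e \in E := subsetP hsub e heF.
have n2 : (2 <= #|T|)%N.
  have := (forallP sg e); rewrite heE /= => /eqP <-; exact: max_card.
have hL : (/2 < L)%R.
  apply: (Rlt_le_trans _ _ _ ln_lt_2); rewrite /L.
  have h2 : (2 <= INR #|T|)%R.
    change 2%R with (INR 2); apply: le_INR; apply/leP; exact n2.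
  destruct (Rle_lt_or_eq_dec _ _ h2) as [hl|hq].
    left; apply: ln_increasing; lra.
  rewrite hq; right; reflexivity.
have hF0 : (0 < #|F|)%N by apply/card_gt0P; exists e.
have hf : (0 < f)%R by apply: lt_0_INR; apply/ltP.
have hfm : (f <= mm)%R by apply: le_INR; apply/leP; exact: subset_leq_card.
have hDQ : (D <= Q)%R by apply: le_INR; apply/leP; exact: deg_le.
have hQ0 : (0 <= Q)%R by apply: pos_INR.
have hcf0 : (0 <= 16 * L / f * Q)%R.
  apply: Rmult_le_pos => //; apply: Rmult_le_pos; try lra; left; exact: Rinv_0_lt_compat.
have hD1 : (1 <= D)%R.
  have hd : (0 < C4_deg F e)%coq_nat by apply: INR_lt; simpl; rewrite -/D; lra.
  change 1%R with (INR 1); apply: le_INR; lia.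
have hcf : (16 * L < f)%R by apply: (real_core Q D (16*L) f); lra.
case: (leqP #|E| (2 * (#|F| - 1))) => hm.
  have hc := cardsD1 e F; rewrite heF /= in hc.
  have hcq := @copies_card_D1 _ F e.
  apply: (IH (F :\ e)).
  - by move: hk; rewrite hc add1n ltnS.
  - by apply: subset_trans hsub; apply: subsetDl.
  - by move: hm; rewrite hc add1n subn1.
  - have hQe : INR #|C4_copies (F :\ e)| = (Q - D)%R.
      rewrite /Q /D -hcq plus_INR; lra.
    rewrite hQe.
    have -> : INR #|F :\ e| = (f - 1)%R by rewrite /f hc plus_INR /=; lra.
    have := real_step Q D (16*L) f mm (4 * L - 16 * L * (mm - f) / mm)%R hQ0 ltac:(lra) hf hfm hbad hinv.
    have -> : (4 * L - 16 * L * (mm - f) / mm - 16 * L / mm = 4 * L - 16 * L * (mm - (f - 1)) / mm)%R.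
      field; lra.
    by [].
exfalso.
have hF3 : (3 <= #|F|)%N.
  have : (2 < #|F|)%coq_nat by apply: INR_lt; simpl; rewrite -/f; lra.
  lia.
have hfn : (4 * #|F| < 3 * #|E|)%coq_nat.
  have := subset_leq_card hsub. lia.
have hfr : (4 * f < 3 * mm)%R.
  have := lt_INR _ _ hfn; rewrite !mult_INR /f /mm /=. lra.
apply: (real_contra Q L mm f) => //; try lra.
Qed.
End Main.

Theorem lemma2p10 (T : finType) (E : {set {set T}}) :
  simple_graph E -> E != set0 ->
  exists E' : {set {set T}},
    [/\ E' \subset E,
        (#|E| <= 2 * #|E'|)%N &
        forall e, e \in E' ->
          (INR (C4_deg E' e) <=
             16 * ln (INR #|T|) / INR #|E'| * INR #|C4_copies E'|)%R].
Proof.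
move=> sg hne.
have E0 : (0 < #|E|)%N by rewrite card_gt0.
have := @main_ind T E sg E0 #|E| E (leqnn #|E|) (subxx E).
case=> //.
- lia.
- have -> : (16 * ln (INR #|T|) * (INR #|E| - INR #|E|) / INR #|E| = 0)%R.
    have : (0 < INR #|E|)%R by apply: lt_0_INR; apply/ltP.
    intros; field; lra.
  rewrite Rminus_0_r.
  have hn : (0 < INR #|T|)%R.
    apply: lt_0_INR; apply/ltP. move/set0Pn: hne => [e heE].
    have := (forallP sg e); rewrite heE /= => /eqP h2.
    by apply: leq_trans (max_card (mem e)); rewrite h2.
  have -> : (4 * ln (INR #|T|) = ln (INR #|T| ^ 4))%R by rewrite ln_pow //; simpl; ring.
  rewrite exp_ln; last exact: pow_lt.
  have := @copies_bound _ E => /leP/le_INR; rewrite !mult_INR /=. lra.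
- move=> E' [h1 h2 h3]; by exists E'.
Qed.
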